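(* For every $q^s\in\mathbb{R}^{d_s}$ and every $i=1,\dots,d_s$, $F_3(q^s)^TG_{2,i}(q^s)=G_{2,i}(q^s)^TF_3(q^s)$, i.e. $F_3^TG_{2,i}$ is symmetric.
   Context: Let $d_f,d_s\ge1$, $\epsilon>0$, and let $K:\mathbb{R}^{d_s}\to\mathbb{R}^{d_f\times d_f}$ be continuously differentiable with symmetric positive definite values. Let $H>0$, let $n\ge1$ be an integer and $h=H/2^n$. For $q^s\in\mathbb{R}^{d_s}$ write $a=\epsilon^{-1}K(q^s)$ and $b_i=\epsilon^{-1}\partial K(q^s)/\partial q^s_i$, and define the $2d_f\times 2d_f$ block matrices $$A(q^s)=\begin{bmatrix} I-\tfrac{h^2}{2}a & h\,a\\ -h\big(I-\tfrac{h^2}{4}a\big) & I-\tfrac{h^2}{2}a\end{bmatrix},\quad C(q^s)=\begin{bmatrix} I-\tfrac{h^2}{2}a & h\big(I-\tfrac{h^2}{4}a\big)\\ -h\,a & I-\tfrac{h^2}{2}a\end{bmatrix},$$ $$B_i(q^s)=\begin{bmatrix} h\,b_i & \tfrac{h^2}{2}b_i\\ -\tfrac{h^2}{2}b_i & -\tfrac{h^3}{4}b_i\end{bmatrix}.$$ Define $F_2,G_{2,i},F_3$ by $\begin{bmatrix}F_2 & G_{2,i}\\0&F_3\end{bmatrix}=\begin{bmatrix}A&B_i\\0&C\end{bmatrix}^{2^n}$. *)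

(* Defs.v *)
From Stdlib Require Import Reals.
From mathcomp Require Import ssreflect ssrfun ssrbool eqtype ssrnat seq choice fintype.
Set Implicit Arguments. Unset Strict Implicit. Unset Printing Implicit Defensive.
Local Open Scope R_scope.

Definition vec (n : nat) := 'I_n -> R.
Definition mx (n : nat) := 'I_n -> 'I_n -> R.

Definition rsum (n : nat) (f : 'I_n -> R) : R :=
  foldr Rplus 0 (map f (enum 'I_n)).

Definition mmul n (A B : mx n) : mx n := fun i j => rsum (fun k => A i k * B k j).
Definition madd n (A B : mx n) : mx n := fun i j => A i j + B i j.
Definition mopp n (A : mx n) : mx n := fun i j => - A i j.
Definition msub n (A B : mx n) : mx n := madd A (mopp B).
Definition mscale n (c : R) (A : mx n) : mx n := fun i j => c * A i j.
Definition mid n : mx n := fun i j => if i == j then 1 else 0.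
Arguments mid : clear implicits.
Definition mtr n (A : mx n) : mx n := fun i j => A j i.
Fixpoint mpow n (A : mx n) (k : nat) : mx n :=
  match k with O => mid n | S k' => mmul A (mpow A k') end.

Definition block n (A B C D : mx n) : mx (n + n) := fun i j =>
  match split i, split j with
  | inl i', inl j' => A i' j'
  | inl i', inr j' => B i' j'
  | inr i', inl j' => C i' j'
  | inr i', inr j' => D i' j'
  end.
Definition blk11 n (X : mx (n + n)) : mx n := fun i j => X (lshift n i) (lshift n j).
Definition blk12 n (X : mx (n + n)) : mx n := fun i j => X (lshift n i) (rshift n j).
Definition blk22 n (X : mx (n + n)) : mx n := fun i j => X (rshift n i) (rshift n j).

Definition spd n (M : mx n) : Prop :=
  mtr M = M /\
  forall x : vec n, (exists i, x i <> 0) -> 0 < rsum (fun i => rsum (fun j => x i * M i j * x j)).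

Definition shift d (q : vec d) (i : 'I_d) (t : R) : vec d :=
  fun k => if k == i then q k + t else q k.

Definition cont_on d (f : vec d -> R) : Prop :=
  forall q e, 0 < e -> exists delta, 0 < delta /\
    forall q', (forall k, Rabs (q' k - q k) < delta) -> Rabs (f q' - f q) < e.

Definition C1_mx ds df (K : vec ds -> mx df) (dK : 'I_ds -> vec ds -> mx df) : Prop :=
  (forall i q j k, derivable_pt_lim (fun t => K (shift q i t) j k) 0 (dK i q j k)) /\
  (forall i j k, cont_on (fun q => dK i q j k)).

Section Mats.
Variables (df ds : nat) (eps : R) (K : vec ds -> mx df) (dK : 'I_ds -> vec ds -> mx df) (h : R).

Definition amat (q : vec ds) : mx df := mscale (/ eps) (K q).
Definition bmat (i : 'I_ds) (q : vec ds) : mx df := mscale (/ eps) (dK i q).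

Definition Amat q : mx (df + df) :=
  let a := amat q in
  block (msub (mid df) (mscale (h^2/2) a)) (mscale h a)
        (mscale (- h) (msub (mid df) (mscale (h^2/4) a))) (msub (mid df) (mscale (h^2/2) a)).
Definition Cmat q : mx (df + df) :=
  let a := amat q in
  block (msub (mid df) (mscale (h^2/2) a)) (mscale h (msub (mid df) (mscale (h^2/4) a)))
        (mscale (- h) a) (msub (mid df) (mscale (h^2/2) a)).
Definition Bmat i q : mx (df + df) :=
  let b := bmat i q in
  block (mscale h b) (mscale (h^2/2) b) (mscale (-(h^2/2)) b) (mscale (-(h^3/4)) b).

Definition zero_mx n : mx n := fun _ _ => 0.
Arguments zero_mx : clear implicits.

Definition bigM i q : mx ((df + df) + (df + df)) :=
  block (Amat q) (Bmat i q) (zero_mx (df + df)) (Cmat q).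
Definition bigP (n : nat) i q := mpow (bigM i q) (2 ^ n)%nat.

Definition F2 n i q : mx (df + df) := blk11 (bigP n i q).
Definition G2 n i q : mx (df + df) := blk12 (bigP n i q).
Definition F3 n i q : mx (df + df) := blk22 (bigP n i q).
End Mats.

(* Main.v *)
Set Warnings "-notation-overridden".
Require Import Defs.
From HB Require Import structures.
From Stdlib Require Import Reals Lra FunctionalExtensionality.
From mathcomp Require Import ssreflect ssrfun ssrbool eqtype ssrnat seq choice fintype bigop.
Set Implicit Arguments. Unset Strict Implicit.
Set Warnings "-notation-overridden,-redundant-canonical-projection".
Local Open Scope R_scope.

HB.instance Definition _ := Monoid.isComLaw.Build R 0 Rplus (fun x y z => esym (Rplus_assoc x y z)) Rplus_comm Rplus_0_l.

Lemma rsum_big n (f : 'I_n -> R) : rsum f = \big[Rplus/0]_(k < n) f k.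
Proof.
rewrite /rsum -big_enum /=.
elim: (enum 'I_n) => [|x s IH] /=; first by rewrite big_nil.
by rewrite big_cons IH.
Qed.

Lemma rsum_add n (f g : 'I_n -> R) : rsum (fun k => f k + g k) = rsum f + rsum g.
Proof. by rewrite !rsum_big big_split. Qed.

Lemma rsum_scale n c (f : 'I_n -> R) : rsum (fun k => c * f k) = c * rsum f.
Proof.
rewrite /rsum; elim: (enum 'I_n) => [|x s IH] /=; first ring.
rewrite IH; ring.
Qed.

Lemma rsum_ext n (f g : 'I_n -> R) : (forall k, f k = g k) -> rsum f = rsum g.
Proof. by move=> e; rewrite (functional_extensionality _ _ e). Qed.

Lemma rsum_swap n (f : 'I_n -> 'I_n -> R) :
  rsum (fun i => rsum (fun j => f i j)) = rsum (fun j => rsum (fun i => f i j)).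
Proof. by rewrite !rsum_big; under eq_bigr do rewrite rsum_big; rewrite exchange_big;
  under [RHS]eq_bigr do rewrite rsum_big. Qed.

Lemma rsum_mid_l n i (f : 'I_n -> R) : rsum (fun k => mid n i k * f k) = f i.
Proof.
rewrite rsum_big (bigD1 i) //= big1 /mid; first by rewrite eqxx; ring.
by move=> k /negbTE; rewrite eq_sym => ->; ring.
Qed.

Lemma rsum_mid_r n j (f : 'I_n -> R) : rsum (fun k => f k * mid n k j) = f j.
Proof.
rewrite -(rsum_mid_l j f); apply: rsum_ext => k; rewrite /mid eq_sym; ring.
Qed.

Lemma rsum_split n (f : 'I_(n+n) -> R) :
  rsum f = rsum (fun k => f (lshift n k)) + rsum (fun k => f (rshift n k)).
Proof. by rewrite !rsum_big big_split_ord. Qed.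

Lemma rsum_scale_r n c (f : 'I_n -> R) : rsum (fun k => f k * c) = rsum f * c.
Proof. rewrite Rmult_comm -rsum_scale; apply: rsum_ext => k; ring. Qed.

Lemma rsum_zero n : rsum (fun _ : 'I_n => 0) = 0.
Proof. rewrite /rsum; elim: (enum 'I_n) => [|x s IH] //=; rewrite IH; ring. Qed.

Lemma mmul_assoc n (A B C : mx n) : mmul (mmul A B) C = mmul A (mmul B C).
Proof.
apply: functional_extensionality => i; apply: functional_extensionality => j.
rewrite /mmul.
transitivity (rsum (fun k => rsum (fun l => A i l * B l k * C k j))).
  by apply: rsum_ext => k; rewrite -rsum_scale_r.
rewrite rsum_swap; apply: rsum_ext => l; rewrite -rsum_scale; apply: rsum_ext => k; ring.
Qed.

Lemma mmul_addr n (A B C : mx n) : mmul A (madd B C) = madd (mmul A B) (mmul A C).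
Proof.
apply: functional_extensionality => i; apply: functional_extensionality => j.
rewrite /mmul /madd -rsum_add; apply: rsum_ext => k; ring.
Qed.

Lemma mmul_addl n (A B C : mx n) : mmul (madd A B) C = madd (mmul A C) (mmul B C).
Proof.
apply: functional_extensionality => i; apply: functional_extensionality => j.
rewrite /mmul /madd -rsum_add; apply: rsum_ext => k; ring.
Qed.

Lemma mtr_mmul n (A B : mx n) : mtr (mmul A B) = mmul (mtr B) (mtr A).
Proof.
apply: functional_extensionality => i; apply: functional_extensionality => j.
rewrite /mtr /mmul; apply: rsum_ext => k; ring.
Qed.

Lemma mtr_mtr n (A : mx n) : mtr (mtr A) = A.
Proof. by []. Qed.

Lemma mtr_madd n (A B : mx n) : mtr (madd A B) = madd (mtr A) (mtr B).
Proof. by []. Qed.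

Lemma mmul_mid_l n (A : mx n) : mmul (mid n) A = A.
Proof.
apply: functional_extensionality => i; apply: functional_extensionality => j.
by rewrite /mmul rsum_mid_l.
Qed.

Lemma mmul_mid_r n (A : mx n) : mmul A (mid n) = A.
Proof.
apply: functional_extensionality => i; apply: functional_extensionality => j.
by rewrite /mmul rsum_mid_r.
Qed.

Lemma mmul_zero_l n (A : mx n) : mmul (@zero_mx n) A = @zero_mx n.
Proof.
apply: functional_extensionality => i; apply: functional_extensionality => j.
rewrite /mmul /zero_mx; rewrite -[RHS](rsum_zero n); apply: rsum_ext => k; ring.
Qed.

Lemma mmul_zero_r n (A : mx n) : mmul A (@zero_mx n) = @zero_mx n.
Proof.
apply: functional_extensionality => i; apply: functional_extensionality => j.
rewrite /mmul /zero_mx; rewrite -[RHS](rsum_zero n); apply: rsum_ext => k; ring.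
Qed.

Lemma madd_zero_l n (A : mx n) : madd (@zero_mx n) A = A.
Proof.
apply: functional_extensionality => i; apply: functional_extensionality => j.
rewrite /madd /zero_mx; ring.
Qed.

Lemma madd_zero_r n (A : mx n) : madd A (@zero_mx n) = A.
Proof.
apply: functional_extensionality => i; apply: functional_extensionality => j.
rewrite /madd /zero_mx; ring.
Qed.

Lemma splitL n (i : 'I_n) : split (lshift n i) = inl i.
Proof. exact: (unsplitK (inl _ i)). Qed.
Lemma splitR n (i : 'I_n) : split (rshift n i) = inr i.
Proof. exact: (unsplitK (inr _ i)). Qed.

Lemma block_mul n (A1 B1 C1 D1 A2 B2 C2 D2 : mx n) :
  mmul (block A1 B1 C1 D1) (block A2 B2 C2 D2) =
  block (madd (mmul A1 A2) (mmul B1 C2)) (madd (mmul A1 B2) (mmul B1 D2))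
        (madd (mmul C1 A2) (mmul D1 C2)) (madd (mmul C1 B2) (mmul D1 D2)).
Proof.
apply: functional_extensionality => i; apply: functional_extensionality => j.
rewrite /mmul rsum_split /madd.
case: (split_ordP i) => i' ->; case: (split_ordP j) => j' ->; rewrite /block ?splitL ?splitR;
  (under rsum_ext => k do rewrite ?splitL ?splitR);
  by under [in X in _ + X]rsum_ext => k do rewrite ?splitL ?splitR.
Qed.

Lemma block_tr n (A B C D : mx n) :
  mtr (block A B C D) = block (mtr A) (mtr C) (mtr B) (mtr D).
Proof.
apply: functional_extensionality => i; apply: functional_extensionality => j.
rewrite /mtr /block.
by case: (split_ordP i) => i' e1; case: (split_ordP j) => j' e2; rewrite ?e1 ?e2 ?splitL ?splitR.
Qed.

Lemma mid_block n : mid (n + n) = block (mid n) (@zero_mx n) (@zero_mx n) (mid n).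
Proof.
apply: functional_extensionality => i; apply: functional_extensionality => j.
rewrite /mid /block /zero_mx.
case: (split_ordP i) => i' e1; case: (split_ordP j) => j' e2; rewrite ?e1 ?e2 ?splitL ?splitR //.
all: by rewrite ?eq_lrshift ?eq_rlshift ?eq_rshift ?eq_lshift.
Qed.

Lemma blk12_block n (A B C D : mx n) : blk12 (block A B C D) = B.
Proof. by rewrite /blk12 /block; apply: functional_extensionality => i;
  apply: functional_extensionality => j; rewrite splitL splitR. Qed.
Lemma blk22_block n (A B C D : mx n) : blk22 (block A B C D) = D.
Proof. by rewrite /blk22 /block; apply: functional_extensionality => i;
  apply: functional_extensionality => j; rewrite !splitR. Qed.

Fixpoint Gs n (A B C : mx n) (N : nat) : mx n :=
  match N with O => @zero_mx n | S N' => madd (mmul A (Gs A B C N')) (mmul B (mpow C N')) end.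

Lemma mpow_tri n (A B C : mx n) N :
  mpow (block A B (@zero_mx n) C) N = block (mpow A N) (Gs A B C N) (@zero_mx n) (mpow C N).
Proof.
elim: N => [|N IH] /=; first by rewrite mid_block.
by rewrite IH block_mul !mmul_zero_l !mmul_zero_r ?madd_zero_r ?madd_zero_l.
Qed.

Definition Lm n p c (X : mx n) : mx n := fun i j => p * mid n i j + c * X i j.

Lemma mmul_L n p c r s (X Y : mx n) :
  mmul (Lm p c X) (Lm r s Y) =
  fun i j => p*r*mid n i j + p*s*Y i j + c*r*X i j + c*s*mmul X Y i j.
Proof.
apply: functional_extensionality => i; apply: functional_extensionality => j.
rewrite /mmul /Lm.
transitivity (rsum (fun k => p * r * (mid n i k * mid n k j) + p * s * (mid n i k * Y k j)
   + c * r * (X i k * mid n k j) + c * s * (X i k * Y k j))).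
  by apply: rsum_ext => k; ring.
by rewrite !rsum_add !rsum_scale rsum_mid_l rsum_mid_l rsum_mid_r.
Qed.

Lemma mtr_mid n : mtr (mid n) = mid n.
Proof.
apply: functional_extensionality => i; apply: functional_extensionality => j.
by rewrite /mtr /mid eq_sym.
Qed.

Lemma sym_step m (A B C : mx m) N :
  mmul (mtr C) A = mid m -> mtr (mmul (mtr C) B) = mmul (mtr C) B ->
  mtr (mmul (mtr (mpow C N)) (Gs A B C N)) = mmul (mtr (mpow C N)) (Gs A B C N).
Proof.
move=> hA hB; elim: N => [|N IH] /=.
  by rewrite mmul_zero_r.
have E : mmul (mtr (mmul C (mpow C N))) (madd (mmul A (Gs A B C N)) (mmul B (mpow C N)))
   = madd (mmul (mtr (mpow C N)) (Gs A B C N))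
          (mmul (mtr (mpow C N)) (mmul (mmul (mtr C) B) (mpow C N))).
  rewrite mtr_mmul mmul_addr !mmul_assoc -(mmul_assoc (mtr C) A) hA mmul_mid_l.
  by rewrite -(mmul_assoc (mtr C) B).
rewrite E mtr_madd IH; congr madd.
by rewrite mtr_mmul (mtr_mmul (mmul (mtr C) B)) hB mtr_mtr mmul_assoc.
Qed.

Lemma midS n i j : mid n j i = mid n i j.
Proof. by rewrite /mid eq_sym. Qed.

Ltac fext := apply: functional_extensionality => ?; apply: functional_extensionality => ?.

Ltac lm_tac Hs := fext; rewrite /msub /madd /mopp /mscale /Lm /mtr /zero_mx; first [field | rewrite midS; field | rewrite Hs; field | rewrite midS Hs; field].

Lemma CA df (a : mx df) h : (forall i j, a j i = a i j) ->
  let A := block (msub (mid df) (mscale (h^2/2) a)) (mscale h a)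
        (mscale (- h) (msub (mid df) (mscale (h^2/4) a))) (msub (mid df) (mscale (h^2/2) a)) in
  let C := block (msub (mid df) (mscale (h^2/2) a)) (mscale h (msub (mid df) (mscale (h^2/4) a)))
        (mscale (- h) a) (msub (mid df) (mscale (h^2/2) a)) in
  mmul (mtr C) A = mid (df + df).
Proof.
move=> Hs A C; rewrite /A /C block_tr.
have -> : mtr (msub (mid df) (mscale (h^2/2) a)) = Lm 1 (-(h^2/2)) a by lm_tac Hs.
have -> : msub (mid df) (mscale (h^2/2) a) = Lm 1 (-(h^2/2)) a by lm_tac Hs.
have -> : mtr (mscale (- h) a) = Lm 0 (-h) a by lm_tac Hs.
have -> : mtr (mscale h (msub (mid df) (mscale (h^2/4) a))) = Lm h (-(h*(h^2/4))) a by lm_tac Hs.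
have -> : mscale h a = Lm 0 h a by lm_tac Hs.
have -> : mscale (- h) (msub (mid df) (mscale (h^2/4) a)) = Lm (-h) (h*(h^2/4)) a by lm_tac Hs.
rewrite block_mul. rewrite !mmul_L. rewrite mid_block. f_equal; lm_tac Hs.
Qed.


Lemma CB df (a b : mx df) h : (forall i j, a j i = a i j) -> (forall i j, b j i = b i j) ->
  let B := block (mscale h b) (mscale (h^2/2) b) (mscale (-(h^2/2)) b) (mscale (-(h^3/4)) b) in
  let C := block (msub (mid df) (mscale (h^2/2) a)) (mscale h (msub (mid df) (mscale (h^2/4) a)))
        (mscale (- h) a) (msub (mid df) (mscale (h^2/2) a)) in
  mtr (mmul (mtr C) B) = mmul (mtr C) B.
Proof.
move=> Hs Hb B C.
have -> : mmul (mtr C) B = block (Lm 0 h b) (Lm 0 (h^2/2) b) (Lm 0 (h^2/2) b) (Lm 0 (h^3/4) b).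
  rewrite /B /C block_tr.
  have -> : mtr (msub (mid df) (mscale (h^2/2) a)) = Lm 1 (-(h^2/2)) a by lm_tac Hs.
  have -> : mtr (mscale (- h) a) = Lm 0 (-h) a by lm_tac Hs.
  have -> : mtr (mscale h (msub (mid df) (mscale (h^2/4) a))) = Lm h (-(h*(h^2/4))) a by lm_tac Hs.
  have -> : mscale h b = Lm 0 h b by lm_tac Hs.
  have -> : mscale (h^2/2) b = Lm 0 (h^2/2) b by lm_tac Hs.
  have -> : mscale (-(h^2/2)) b = Lm 0 (-(h^2/2)) b by lm_tac Hs.
  have -> : mscale (-(h^3/4)) b = Lm 0 (-(h^3/4)) b by lm_tac Hs.
  rewrite block_mul !mmul_L; f_equal; lm_tac Hs.
rewrite block_tr; f_equal; lm_tac Hb.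
Qed.

Theorem lemma3p6 (df ds : nat) (eps : R) (K : vec ds -> mx df)
  (dK : 'I_ds -> vec ds -> mx df) (H : R) (n : nat) :
  (1 <= df)%nat -> (1 <= ds)%nat -> 0 < eps ->
  (forall q, spd (K q)) -> C1_mx K dK ->
  0 < H -> (1 <= n)%nat ->
  let h := H / 2 ^ n in
  forall (q : vec ds) (i : 'I_ds),
    mmul (mtr (F3 eps K dK h n i q)) (G2 eps K dK h n i q)
    = mmul (mtr (G2 eps K dK h n i q)) (F3 eps K dK h n i q).
Proof.
move=> _ _ _ Hspd [Hder _] _ _ h q i.
have Ha : forall j k, amat eps K q k j = amat eps K q j k.
  move=> j k; rewrite /amat /mscale; case: (Hspd q) => Hs _.
  by rewrite -[in RHS]Hs.
have Hb : forall j k, bmat eps dK i q k j = bmat eps dK i q j k.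
  move=> j k; rewrite /bmat /mscale; congr Rmult.
  apply: (uniqueness_limite (fun t => K (shift q i t) k j) 0); first exact: Hder.
  have -> : (fun t => K (shift q i t) k j) = (fun t => K (shift q i t) j k).
    apply: functional_extensionality => t; case: (Hspd (shift q i t)) => Hs _.
    by rewrite -[in RHS]Hs.
  exact: Hder.
have hCA : mmul (mtr (Cmat eps K h q)) (Amat eps K h q) = mid (df + df).
  exact: (CA h Ha).
have hCB : mtr (mmul (mtr (Cmat eps K h q)) (Bmat eps dK h i q))
         = mmul (mtr (Cmat eps K h q)) (Bmat eps dK h i q).
  exact: (CB h Ha Hb).
rewrite /F3 /G2 /bigP /bigM mpow_tri blk22_block blk12_block.
have := sym_step (2 ^ n)%nat hCA hCB; rewrite mtr_mmul mtr_mtr => ->.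
by [].
Qed.
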